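(* Fix an iteration $i$ of the algorithm in the context, and let $z=z^{(i)}$, $\lambda=\lambda^{(i)}$, $\nu=\nu^{(i)}$, $s=s^{(i)}$, $d_z=d_z^{(i)}$, $d_\lambda=d_\lambda^{(i)}$, $d_\nu=d_\nu^{(i)}$, $d_s=d_s^{(i)}$. For $\rho\ge0$ let $\phi(t,\rho)=\mathcal{L}_{\mathrm{aug}}^{\rho}(z+td_z,\lambda+td_\lambda,\nu+td_\nu,s+td_s)$ and $\phi'(0,\rho)$ its derivative in $t$ at $t=0$. Then there exists $\hat\rho\ge0$ such that $\sup_{\rho\ge\hat\rho}\phi'(0,\rho)\le-\frac{1}{2\alpha^{(i)}}\|d_z^{(i)}\|^2.$
   Context: Problem: $\min_{z\in\mathbb{R}^n}J(z)$ s.t. $g(z)\le0$, $h(z)=0$, with $J,g,h$ twice continuously differentiable ($g:\mathbb{R}^n\to\mathbb{R}^m$, $h:\mathbb{R}^n\to\mathbb{R}^p$); $\nabla g,\nabla h$ have component gradients as columns. Augmented Lagrangian: $\mathcal{L}_{\mathrm{aug}}^{\rho}(z,\lambda,\nu,s)=J(z)+(g(z)+s)^\top\lambda+h(z)^\top\nu+\frac{\rho}{2}\|g(z)+s\|^2+\frac{\rho}{2}\|h(z)\|^2$. Algorithm: at iterate $z^{(i)}$ with bounded step $\alpha^{(i)}>0$, $d_z^{(i)}$ is the Euclidean projection of $-\alpha^{(i)}\nabla J(z^{(i)})$ onto $\mathcal{C}^{(i)}=\{d: g(z^{(i)})+\nabla g(z^{(i)})^\top d\le0,\ h(z^{(i)})+\nabla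 h(z^{(i)})^\top d=0\}$, with multipliers $\lambda_G^{(i)}\ge0$, $\nu_G^{(i)}$ satisfying $\frac{1}{\alpha^{(i)}}d_z^{(i)}+\nabla J(z^{(i)})+\nabla g(z^{(i)})\lambda_G^{(i)}+\nabla h(z^{(i)})\nu_G^{(i)}=0$, $\mathrm{diag}(\lambda_G^{(i)})(g(z^{(i)})+\nabla g(z^{(i)})^\top d_z^{(i)})=0$, $h(z^{(i)})+\nabla h(z^{(i)})^\top d_z^{(i)}=0$. Duals: $\lambda^{(0)}=\lambda_G^{(0)}$, $\nu^{(0)}=\nu_G^{(0)}$, $d_\lambda^{(i)}=\lambda_G^{(i)}-\lambda^{(i)}$, $d_\nu^{(i)}=\nu_G^{(i)}-\nu^{(i)}$. Slack $s^{(i)}\in\mathbb{R}^m_{\ge0}$: $s^{(i)}_j=\max\{0,-g_j(z^{(i)})\}$ if the current penalty is $0$, else $\max\{0,-g_j(z^{(i)})-\lambda^{(i)}_j/\rho\}$; $d_s^{(i)}$ is defined by $g(z^{(i)})+\nabla g(z^{(i)})^\top d_z^{(i)}+s^{(i)}+d_s^{(i)}=0$. Standing assumptions: $\mathcal{C}^{(i)}\ne\emptyset$ for all $i$; all $z^{(i)}$, $z^{(i)}+d_z^{(i)}$ lie in a compact set; $J,g,h$ and their first and second derivatives are uniformly bounded there. Assumption (R): for all $i$, $\nabla h(z^{(i)})$ together with the columns $\nabla g_j(z^{(i)})$ active in the projection problem has full column rank, and strict complementarity holds. *)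

(* Defs.v *)
From HB Require Import structures.
From mathcomp Require Import all_boot all_order all_algebra.
From mathcomp Require Import all_classical all_reals all_analysis.
Set Implicit Arguments. Unset Strict Implicit. Unset Printing Implicit Defensive.
Import Order.TTheory GRing.Theory Num.Theory.
Import numFieldNormedType.Exports.
Local Open Scope ring_scope.

Definition evec {R : realType} {n : nat} (i : 'I_n) : 'cV[R]_n := delta_mx i 0.

Definition dotv (R : realType) (k : nat) (u v : 'cV[R]_k) : R :=
  \sum_(j < k) u j 0 * v j 0.
Definition sqnorm (R : realType) (k : nat) (u : 'cV[R]_k) : R := dotv u u.

Definition gradS (R : realType) (n : nat) (f : 'cV[R]_n -> R) (z : 'cV[R]_n)
  : 'cV[R]_n := \col_i ('D_(evec i) f z).

(* Jacobian-transpose of a vector function: the matrix whose j-th column is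
   the gradient of the j-th component f_j (convention of the paper) *)
Definition gradV (R : realType) (n k : nat) (f : 'cV[R]_n -> 'cV[R]_k)
  (z : 'cV[R]_n) : 'M[R]_(n, k) :=
  \matrix_(i, j) ('D_(evec i) (fun x => f x j 0) z).

Definition C1 (R : realType) (n : nat) (f : 'cV[R]_n -> R) : Prop :=
  (forall x, differentiable f x) /\
  (forall i : 'I_n, continuous (fun x => 'D_(evec i) f x)).

Definition C2 (R : realType) (n : nat) (f : 'cV[R]_n -> R) : Prop :=
  C1 f /\ forall i : 'I_n, C1 (fun x => 'D_(evec i) f x).

Definition C2v (R : realType) (n k : nat) (f : 'cV[R]_n -> 'cV[R]_k) : Prop :=
  forall j : 'I_k, C2 (fun x => f x j 0).

Definition Laug (R : realType) (n m p : nat) (J : 'cV[R]_n -> R)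
  (g : 'cV[R]_n -> 'cV[R]_m) (h : 'cV[R]_n -> 'cV[R]_p) (rho : R)
  (z : 'cV[R]_n) (lam : 'cV[R]_m) (nu : 'cV[R]_p) (s : 'cV[R]_m) : R :=
  J z + dotv (g z + s) lam + dotv (h z) nu
  + rho / 2 * sqnorm (g z + s) + rho / 2 * sqnorm (h z).

Definition linFeas (R : realType) (n m p : nat)
  (g : 'cV[R]_n -> 'cV[R]_m) (h : 'cV[R]_n -> 'cV[R]_p) (z d : 'cV[R]_n) : Prop :=
  (forall j, (g z + (gradV g z)^T *m d) j 0 <= 0) /\
  h z + (gradV h z)^T *m d = 0.

Definition slack (R : realType) (n m : nat) (g : 'cV[R]_n -> 'cV[R]_m)
  (rc : R) (z : 'cV[R]_n) (lam : 'cV[R]_m) : 'cV[R]_m :=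
  \col_j (if rc == 0 then Num.max 0 (- g z j 0)
          else Num.max 0 (- g z j 0 - lam j 0 / rc)).

(* Main.v *)
Require Import Defs.
From HB Require Import structures.
From mathcomp Require Import all_boot all_order all_algebra.
From mathcomp Require Import all_classical all_reals all_analysis.
From mathcomp Require Import ring lra.
Import Order.TTheory GRing.Theory Num.Theory.
Import numFieldNormedType.Exports.
Local Open Scope ring_scope.

Set Implicit Arguments. Unset Strict Implicit.
Section H.
Variable R : realType.

Lemma dD (a b : R -> R) da db : is_derive (0:R) (1:R) a da -> is_derive (0:R) (1:R) b db ->
  is_derive (0:R) (1:R) (fun t => a t + b t) (da + db).
Proof. move=> ha hb; exact: is_deriveD. Qed.

Lemma dM (a b : R -> R) da db : is_derive (0:R) (1:R) a da -> is_derive (0:R) (1:R) b db ->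
  is_derive (0:R) (1:R) (fun t => a t * b t) (a 0 * db + b 0 * da).
Proof. move=> ha hb; exact: is_deriveM. Qed.

Lemma dZl (c : R) (a : R -> R) da : is_derive (0:R) (1:R) a da ->
  is_derive (0:R) (1:R) (fun t => c * a t) (c * da).
Proof. move=> ha; exact: is_deriveZ. Qed.

Lemma dsum k (a : 'I_k -> R -> R) da : (forall j, is_derive (0:R) (1:R) (a j) (da j)) ->
  is_derive (0:R) (1:R) (fun t => \sum_(j < k) a j t) (\sum_(j < k) da j).
Proof. move=> ha; rewrite -fct_sumE; exact: is_derive_sum. Qed.

Lemma dcst (c : R) : is_derive (0:R) (1:R) (fun _ => c) 0.
Proof. exact: is_derive_cst. Qed.

Lemma dlin1 (c d : R) : is_derive (0:R) (1:R) (fun t => c + t * d) d.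
Proof.
have h1 : is_derive (0:R) (1:R) (fun t : R => t) 1 by exact: is_derive_id.
have := dD (dcst c) (dM h1 (dcst d)).
by rewrite mul0r mulr1 add0r add0r.
Qed.

Lemma dlin k (u v : 'cV[R]_k) j : is_derive (0:R) (1:R) (fun t => (u + t *: v) j 0) (v j 0).
Proof.
have -> : (fun t => (u + t *: v) j 0) = (fun t => u j 0 + t * v j 0).
  by apply/funext => t; rewrite !mxE.
exact: dlin1.
Qed.
Lemma dcomp n (f : 'cV[R]_n -> R) (z dz : 'cV[R]_n) : differentiable f z ->
  is_derive (0:R) (1:R) (fun t => f (z + t *: dz)) (\sum_i dz i 0 * 'D_(evec i) f z).
Proof.
move=> df.
have der : derivable f z dz := diff_derivable (v:=dz) df.
have E : (fun t : R => f (z + t *: dz)) = (fun h => f (h *: dz + z)).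
  by apply/funext => t; rewrite addrC.
have der1 : derivable (fun t : R => f (z + t *: dz)) 0 1.
  by rewrite E; move/derivable1P: der.
have -> : \sum_i dz i 0 * 'D_(evec i) f z = 'D_1 (fun t : R => f (z + t *: dz)) 0.
  have -> : 'D_1 (fun t : R => f (z + t *: dz)) 0 = 'D_dz f z.
    rewrite /derive; congr lim.
    have -> : (fun h : R => h^-1 *: (((fun t : R => f (z + t *: dz)) \o shift 0) h%:A - f (z + 0 *: dz))) = (fun h : R => h^-1 *: ((f \o shift z) (h *: dz) - f z)) => //.
    apply/funext => h /=.
    by rewrite scale0r !addr0 [h%:A]mulr1 [z + _]addrC.
  rewrite (@deriveE _ _ _ f z dz df).
  rewrite {2}(matrix_sum_delta dz) linear_sum; apply: eq_bigr => i _.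
  rewrite big_ord1 linearZ /= -deriveE //.
by apply: derivableP.
Qed.
Lemma dcompV n k (g : 'cV[R]_n -> 'cV[R]_k) (z dz : 'cV[R]_n) j :
  differentiable (fun x => g x j 0) z ->
  is_derive (0:R) (1:R) (fun t => g (z + t *: dz) j 0) (((gradV g z)^T *m dz) j 0).
Proof.
move=> df; have := dcomp dz df.
suff -> : \sum_i dz i 0 * 'D_(evec i) (fun x => g x j 0) z = ((gradV g z)^T *m dz) j 0 by [].
by rewrite mxE; apply: eq_bigr => i _; rewrite !mxE mulrC.
Qed.

Lemma dU n k (g : 'cV[R]_n -> 'cV[R]_k) (z dz : 'cV[R]_n) (s ds : 'cV[R]_k) j :
  differentiable (fun x => g x j 0) z ->
  is_derive (0:R) (1:R) (fun t => (g (z + t *: dz) + (s + t *: ds)) j 0)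
    (((gradV g z)^T *m dz) j 0 + ds j 0).
Proof.
move=> df.
have -> : (fun t => (g (z + t *: dz) + (s + t *: ds)) j 0) =
          (fun t => g (z + t *: dz) j 0 + (s + t *: ds) j 0).
  by apply/funext => t; rewrite mxE.
exact: dD (dcompV dz df) (dlin s ds j).
Qed.

Lemma quad_le (A U rho : R) : (U = 0 -> A <= 0) ->
  Num.max 0 (A / (U * U)) <= rho -> A - rho * (U * U) <= 0.
Proof.
move=> hU; rewrite ge_max => /andP[r0 hr].
have [U0|nz] := eqVneq U 0; first by rewrite U0 mulr0 mulr0 subr0; apply: hU.
have pos : 0 < U * U by rewrite -expr2 exprn_even_gt0 //=.
rewrite subr_le0; move: hr; rewrite ler_pdivrMr //.
Qed.

Lemma sqge0 (x : R) : 0 <= x * x.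
Proof. by rewrite -expr2 sqr_ge0. Qed.

Lemma le_sum_term k (F : 'I_k -> R) i : (forall j, 0 <= F j) -> F i <= \sum_j F j.
Proof.
move=> h0; rewrite (bigD1 i) //= lerDl; exact: sumr_ge0.
Qed.

Lemma lin4 (a b c d : R) : a + b + c + d = 0 -> b = - a - c - d.
Proof. move=> H; apply/eqP; rewrite -subr_eq0 -H; apply/eqP; ring. Qed.

Lemma comb m p (Jd c r : R) (T Q X: 'I_m -> R) (T' Q' X' : 'I_p -> R) :
  Jd = c - \sum_j X j - \sum_k X' k ->
  Jd + \sum_j T j + \sum_k T' k + r * \sum_j Q j + r * \sum_k Q' k
  = c + \sum_j (T j + r * Q j - X j) + \sum_k (T' k + r * Q' k - X' k).
Proof.
move=> ->; rewrite !sumrB !big_split /= -!mulr_sumr; ring.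
Qed.
End H.

Theorem lemma4p5 (R : realType) (n m p : nat)
  (J : 'cV[R]_n -> R) (g : 'cV[R]_n -> 'cV[R]_m) (h : 'cV[R]_n -> 'cV[R]_p)
  (hJ : C2 J) (hg : C2v g) (hh : C2v h)
  (alpha : R) (halpha : 0 < alpha)
  (z : 'cV[R]_n) (lam : 'cV[R]_m) (nu : 'cV[R]_p) (rc : R) (hrc : 0 <= rc)
  (dz : 'cV[R]_n) (lamG : 'cV[R]_m) (nuG : 'cV[R]_p)
  (* d_z is the Euclidean projection of -alpha grad J(z) onto C *)
  (hdzC : linFeas g h z dz)
  (hproj : forall d, linFeas g h z d ->
     sqnorm (dz + alpha *: gradS J z) <= sqnorm (d + alpha *: gradS J z))
  (* KKT multipliers of the projection problem *)
  (hlamG : forall j, 0 <= lamG j 0)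
  (hstat : alpha^-1 *: dz + gradS J z + gradV g z *m lamG + gradV h z *m nuG = 0)
  (hcompl : forall j, lamG j 0 * (g z + (gradV g z)^T *m dz) j 0 = 0)
  (heq : h z + (gradV h z)^T *m dz = 0)
  (* Assumption (R) at this iterate: linear independence of grad h and the
     active grad g_j, and strict complementarity *)
  (hLICQ : forall (a : 'cV[R]_p) (b : 'cV[R]_m),
     (forall j, (g z + (gradV g z)^T *m dz) j 0 != 0 -> b j 0 = 0) ->
     gradV h z *m a + gradV g z *m b = 0 -> a = 0 /\ b = 0)
  (hstrict : forall j, (g z + (gradV g z)^T *m dz) j 0 = 0 -> 0 < lamG j 0) :
  let s := slack g rc z lam in
  let dlam := lamG - lam in
  let dnu := nuG - nu in
  let ds := - (g z + (gradV g z)^T *m dz + s) in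
  let phi := fun (rho t : R) =>
    Laug J g h rho (z + t *: dz) (lam + t *: dlam) (nu + t *: dnu) (s + t *: ds) in
  exists rhohat : R, 0 <= rhohat /\
    forall rho : R, rhohat <= rho ->
      derive1 (phi rho) 0 <= - (2 * alpha)^-1 * sqnorm dz.
Proof.
move=> s dlam dnu ds phi.
have dJ : differentiable J z := hJ.1.1 z.
have dg : forall j, differentiable (fun x => g x j 0) z := fun j => (hg j).1.1 z.
have dh : forall k, differentiable (fun x => h x k 0) z := fun k => (hh k).1.1 z.
have hd := fun rho : R => dD (dD (dD (dD (dcomp dz dJ)
   (dsum (fun j => dM (dU dz s ds (dg j)) (dlin lam dlam j))))
   (dsum (fun k => dM (dcompV dz (dh k)) (dlin nu dnu k))))
   (dZl (rho / 2) (dsum (fun j => dM (dU dz s ds (dg j)) (dU dz s ds (dg j))))))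
   (dZl (rho / 2) (dsum (fun k => dM (dcompV dz (dh k)) (dcompV dz (dh k))))).
have Ed : forall rho, derive1 (phi rho) 0 = _ := fun rho => etrans (derive1E _ _) (@derive_val _ _ _ _ _ _ _ (hd rho)).
pose Gd j := ((gradV g z)^T *m dz) j 0.
pose Hd k := ((gradV h z)^T *m dz) k 0.
have e1 : \sum_i (gradV g z *m lamG) i 0 * dz i 0 = \sum_j lamG j 0 * Gd j.
  under eq_bigr do rewrite mxE big_distrl /=.
  rewrite exchange_big; apply: eq_bigr => j _; rewrite /Gd mxE big_distrr.
  by apply: eq_bigr => i _; rewrite !mxE /=; ring.
have e2 : \sum_i (gradV h z *m nuG) i 0 * dz i 0 = \sum_k nuG k 0 * Hd k.
  under eq_bigr do rewrite mxE big_distrl /=.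
  rewrite exchange_big; apply: eq_bigr => j _; rewrite /Hd mxE big_distrr.
  by apply: eq_bigr => i _; rewrite !mxE /=; ring.
have hJd : \sum_i dz i 0 * 'D_(evec i) J z =
    - alpha^-1 * sqnorm dz - \sum_j lamG j 0 * Gd j - \sum_k nuG k 0 * Hd k.
  have H1 : \sum_i ((alpha^-1 *: dz + gradS J z + gradV g z *m lamG + gradV h z *m nuG) i 0 * dz i 0) = 0.
    by rewrite hstat; apply: big1 => i _; rewrite mxE mul0r.
  rewrite (eq_bigr (fun i => alpha^-1 * (dz i 0 * dz i 0) + dz i 0 * 'D_(evec i) J z
     + (gradV g z *m lamG) i 0 * dz i 0 + (gradV h z *m nuG) i 0 * dz i 0)) in H1; last first.
    by move=> i _; rewrite !mxE; ring.
  rewrite !big_split /= -mulr_sumr e1 e2 in H1.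
  rewrite /sqnorm /dotv mulNr; exact: lin4 H1.
pose Uf j := g z j 0 + s j 0.
pose Af j := lamG j 0 * g z j 0 + Uf j * (lamG j 0 - 2 * lam j 0).
pose Af' k := 2 * h z k 0 * (nuG k 0 - nu k 0).
pose r j := Num.max 0 (Af j / (Uf j * Uf j)).
pose r' k := Num.max 0 (Af' k / (h z k 0 * h z k 0)).
have r0 : forall j, 0 <= r j by move=> j; rewrite le_max lexx.
have r'0 : forall k, 0 <= r' k by move=> k; rewrite le_max lexx.
have s0 : forall j, 0 <= s j 0.
  by move=> j; rewrite /s /slack mxE; case: ifP => _; rewrite le_max lexx.
exists (\sum_j r j + \sum_k r' k).
split; first by rewrite addr_ge0 // sumr_ge0.
move=> rho hrho.
rewrite Ed (comb _ _ _ _ _ hJd).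
apply: (@le_trans _ _ (- alpha^-1 * sqnorm dz + 0 + 0)).
  apply: lerD; first apply: lerD => //.
    apply: sumr_le0 => j _.
    rewrite !scale0r !addr0 -/(Gd j).
    have hU0 : (g z + s) j 0 = Uf j by rewrite mxE.
    have hds : ds j 0 = - (g z j 0 + Gd j + s j 0) by rewrite /ds /Gd !mxE.
    have hdl : dlam j 0 = lamG j 0 - lam j 0 by rewrite /dlam !mxE.
    have hc : lamG j 0 * Gd j = - (lamG j 0 * g z j 0).
      have H := hcompl j; rewrite mxE in H.
      by apply/eqP; rewrite -subr_eq0 opprK -mulrDr [Gd j + _]addrC; apply/eqP; exact: H.
    rewrite hU0 hds hdl hc.
    apply: (@le_trans _ _ (Af j - rho * (Uf j * Uf j))); last first.
      apply: quad_le.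
        rewrite /Af => hU; rewrite hU mul0r addr0.
        have -> : g z j 0 = - s j 0 by apply/eqP; rewrite -addr_eq0; exact/eqP.
        by rewrite mulrN oppr_le0; apply: mulr_ge0.
      apply: (le_trans _ hrho).
      have hj : r j <= \sum_j r j := le_sum_term j r0.
      apply: (le_trans hj).
      by rewrite lerDl; exact: sumr_ge0.
    by rewrite le_eqVlt; apply/orP; left; apply/eqP; rewrite /Af /Uf; field.
  apply: sumr_le0 => k _.
  rewrite !scale0r !addr0 -/(Hd k).
  have hH : Hd k = - h z k 0.
    have H := congr1 (fun M : 'cV[R]_p => M k 0) heq; rewrite /= mxE in H.
    by apply/eqP; rewrite -addr_eq0 addrC; apply/eqP; rewrite H mxE.
  have hdn : dnu k 0 = nuG k 0 - nu k 0 by rewrite /dnu !mxE.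
  rewrite hH hdn.
  apply: (@le_trans _ _ (Af' k - rho * (h z k 0 * h z k 0))); last first.
    apply: quad_le.
      by rewrite /Af' => ->; rewrite mulr0 mul0r.
    apply: (le_trans _ hrho).
    have hj : r' k <= \sum_k r' k := le_sum_term k r'0.
    apply: (le_trans hj).
    by rewrite lerDr; exact: sumr_ge0.
  by rewrite le_eqVlt; apply/orP; left; apply/eqP; rewrite /Af'; field.
have hN : 0 <= alpha^-1 * sqnorm dz.
  by apply: mulr_ge0; [rewrite invr_ge0 ltW | apply: sumr_ge0 => i _; exact: sqge0].
rewrite !addr0 invfM !mulNr -mulrA lerN2.
move: hN; set x := alpha^-1 * sqnorm dz => hN; lra.
Qed.
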